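(* Let $X$ be a complex Banach space, let $\mathcal{F}$ be an algebra with unit $\mathbf{1}$, and let $\Phi:\mathcal{F}\to\mathcal{C}(X)$ be a proto-calculus. Then for all $f,g\in\mathcal{F}$ and $\lambda\in\mathbb{C}$: (a) If $\lambda\neq 0$ or $\Phi(f)\in\mathcal{L}(X)$, then $\Phi(\lambda f)=\lambda\Phi(f)$. (b) If $\Phi(g)\in\mathcal{L}(X)$, then $\Phi(f)+\Phi(g)=\Phi(f+g)$ and $\Phi(f)\Phi(g)=\Phi(fg)$. (c) If $fg=\mathbf{1}$, then $\Phi(g)$ is injective and $\Phi(g)^{-1}\subseteq\Phi(f)$. If in addition $fg=gf$, then $\Phi(g)^{-1}=\Phi(f)$. (d) The set $\mathrm{bdd}(\mathcal{F},\Phi)=\{f\in\mathcal{F}: \Phi(f)\in\mathcal{L}(X)\}$ is a unital subalgebra of $\mathcal{F}$, and $\Phi:\mathrm{bdd}(\mathcal{F},\Phi)\to\mathcal{L}(X)$ is an algebra homomorphism.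
   Context: $\mathcal{L}(X)$ denotes the bounded linear operators and $\mathcal{C}(X)$ the closed (possibly unbounded) linear operators on $X$. For operators, $S\subseteq T$ means inclusion of graphs; $S+T$ has domain $\mathrm{dom}(S)\cap\mathrm{dom}(T)$, $ST$ has domain $\{x\in\mathrm{dom}(T): Tx\in\mathrm{dom}(S)\}$, and $\lambda T$ has domain $\mathrm{dom}(T)$. The algebra $\mathcal{F}$ need not be commutative. A map $\Phi:\mathcal{F}\to\mathcal{C}(X)$ is a proto-calculus if for all $f,g\in\mathcal{F}$, $\lambda\in\mathbb{C}$: (FC1) $\Phi(\mathbf{1})=I$; (FC2) $\lambda\Phi(f)\subseteq\Phi(\lambda f)$ and $\Phi(f)+\Phi(g)\subseteq\Phi(f+g)$; (FC3) $\Phi(f)\Phi(g)\subseteq\Phi(fg)$ and $\mathrm{dom}(\Phi(f)\Phi(g))=\mathrm{dom}(\Phi(g))\cap\mathrm{dom}(\Phi(fg))$. *)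

(* Defs.v *)
From HB Require Import structures.
From mathcomp Require Import all_boot all_order all_algebra.
From mathcomp Require Import all_classical all_reals all_analysis.
From mathcomp Require Import complex.

Set Implicit Arguments.
Unset Strict Implicit.
Unset Printing Implicit Defensive.

Import Order.TTheory GRing.Theory Num.Theory.
Import numFieldNormedType.Exports.
Local Open Scope classical_set_scope.
Local Open Scope ring_scope.

(* A (possibly unbounded, possibly non-everywhere-defined) linear operator on X
   is represented by its graph, a subset of X * X. *)

Section Operators.
Variable (C : numFieldType) (X : normedModType C).

Definition op := set (X * X).

Definition dom (T : op) : set X := [set x | exists y, T (x, y)].

Definition linear_op (T : op) : Prop :=
  [/\ T (0, 0),
      (forall x y x' y', T (x, y) -> T (x', y') -> T (x + x', y + y')),
      (forall (a : C) x y, T (x, y) -> T (a *: x, a *: y)) &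
      (forall x y y', T (x, y) -> T (x, y') -> y = y')].

Definition closed_op (T : op) : Prop := linear_op T /\ closed T.

Definition bounded_op (T : op) : Prop :=
  [/\ linear_op T, dom T = setT &
      exists M : C, forall x y, T (x, y) -> `|y| <= M * `|x|].

(* graph inclusion S ⊆ T is just [S `<=` T] *)

Definition id_op : op := [set p | p.2 = p.1].

Definition add_op (S T : op) : op :=
  [set p | exists y z, [/\ S (p.1, y), T (p.1, z) & p.2 = y + z]].

Definition mul_op (S T : op) : op :=
  [set p | exists y, T (p.1, y) /\ S (y, p.2)].

Definition scale_op (a : C) (T : op) : op :=
  [set p | exists y, T (p.1, y) /\ p.2 = a *: y].

Definition injective_op (T : op) : Prop :=
  forall x x' y, T (x, y) -> T (x', y) -> x = x'.

Definition inv_op (T : op) : op := [set p | T (p.2, p.1)].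

End Operators.

Definition proto_calculus (C : numFieldType) (X : normedModType C)
    (F : algType C) (Phi : F -> op X) : Prop :=
  (forall f, closed_op (Phi f)) /\
  Phi 1 = @id_op _ X /\
  (forall (a : C) f, scale_op a (Phi f) `<=` Phi (a *: f)) /\
  (forall f g, add_op (Phi f) (Phi g) `<=` Phi (f + g)) /\
  (forall f g, mul_op (Phi f) (Phi g) `<=` Phi (f * g)) /\
  (forall f g, dom (mul_op (Phi f) (Phi g)) = dom (Phi g) `&` dom (Phi (f * g))).

(* Main.v *)
Require Import Defs.
From HB Require Import structures.
From mathcomp Require Import all_boot all_order all_algebra.
From mathcomp Require Import all_classical all_reals all_analysis.
From mathcomp Require Import complex.
Import Order.TTheory GRing.Theory Num.Theory.
Import numFieldNormedType.Exports.
Local Open Scope classical_set_scope.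
Local Open Scope ring_scope.
Section S.
Variables (C : numFieldType) (X : normedModType C) (F : algType C) (Phi : F -> op X).
Hypothesis HP : proto_calculus Phi.

Let lin f : linear_op (Phi f). Proof. by case: HP => Hcl _; case: (Hcl f). Qed.
Let fun_ f x y y' : Phi f (x, y) -> Phi f (x, y') -> y = y'.
Proof. by case: (lin f) => _ _ _; apply. Qed.

Lemma full_eq (S T : op X) : S `<=` T -> (forall x y y', T (x, y) -> T (x, y') -> y = y') ->
  dom S = setT -> S = T.
Proof.
move=> ST Tf dS; apply/seteqP; split => // [[x z]] Txz.
have : dom S x by rewrite dS.
case=> y Sxy; have := ST _ Sxy => Txy.
by rewrite (Tf _ _ _ Txz Txy).
Qed.

Lemma dom_bdd {f} : bounded_op (Phi f) -> forall x, exists y, Phi f (x, y).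
Proof. by case=> _ + _ x => /seteqP [_ /(_ x I)]. Qed.

Lemma pa f a : (a != 0 \/ bounded_op (Phi f)) -> Phi (a *: f) = scale_op a (Phi f).
Proof.
case: HP => _ [_ [Hsc _]].
case=> [a0|bf].
  apply/seteqP; split; last exact: Hsc.
  move=> [x z] /= H.
  have := Hsc a^-1 _ (x, a^-1 *: z) (ex_intro _ z (conj H erefl)).
  rewrite scalerA mulVf // scale1r => Hf.
  by exists (a^-1 *: z); split => //; rewrite scalerA divff // scale1r.
symmetry; apply: full_eq; first exact: Hsc.
  exact: fun_.
apply/seteqP; split => // x _.
have [y Hy] := dom_bdd bf x.
by exists (a *: y); exists y.
Qed.

Lemma pb f g : bounded_op (Phi g) ->
     add_op (Phi f) (Phi g) = Phi (f + g) /\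
     mul_op (Phi f) (Phi g) = Phi (f * g).
Proof.
move=> bg; case: HP => _ [_ [Hsc [Had [Hmu Hdom]]]]; split.
  apply/seteqP; split; first exact: Had.
  move=> [x z] /= H.
  have [w Hw] := dom_bdd bg x.
  have Hm : Phi (- g) (x, - w).
    rewrite -scaleN1r; apply: Hsc; exists w; split => //; by rewrite scaleN1r.
  have := Had _ _ (x, z - w) (ex_intro _ z (ex_intro _ (- w) (And3 H Hm erefl))).
  rewrite addrK => Hf.
  by exists (z - w), w; split => //; rewrite subrK.
apply/seteqP; split; first exact: Hmu.
move=> [x z] /= H.
have : dom (mul_op (Phi f) (Phi g)) x.
  rewrite Hdom; split; last by exists z.
  by have [w Hw] := dom_bdd bg x; exists w.
case=> z' Hz'.
by rewrite (fun_ _ _ _ _ H (Hmu _ _ _ Hz')).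
Qed.

Lemma pc0 {f g x y} : f * g = 1 -> Phi g (x, y) -> Phi f (y, x).
Proof.
move=> fg Hg; case: HP => _ [H1 [_ [_ [Hmu Hdom]]]].
have : dom (mul_op (Phi f) (Phi g)) x.
  rewrite Hdom; split; first by exists y.
  by rewrite fg H1; exists x.
case=> z [y1 [Hy1 Hz]].
have := Hmu _ _ (x, z) (ex_intro _ y1 (conj Hy1 Hz)).
rewrite fg H1 /id_op /= => zx.
by rewrite -zx (fun_ _ _ _ _ Hg Hy1).
Qed.

Lemma normb (T : op X) : bounded_op T -> exists M : C, 0 <= M /\ forall x y, T (x, y) -> `|y| <= M * `|x|.
Proof.
case=> _ _ [M HM]; exists `|M|; split => // x y Hxy.
have h := HM _ _ Hxy.
have h0 : 0 <= M * `|x| by apply: le_trans h.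
by rewrite -[`|x|]normr_id -normrM ger0_norm.
Qed.

End S.
Arguments pa {C X F Phi}.
Arguments pb {C X F Phi}.
Arguments pc0 {C X F Phi} HP {f g x y}.
Arguments dom_bdd {C X F Phi f}.
Arguments normb {C X T}.
Local Open Scope complex_scope.

Theorem theorem2p1 (R : realType) (X : completeNormedModType R[i])
    (F : algType R[i]) (Phi : F -> op X) :
  proto_calculus Phi ->
  (* (a) *)
  (forall (f : F) (a : R[i]), (a != 0 \/ bounded_op (Phi f)) ->
     Phi (a *: f) = scale_op a (Phi f)) /\
  (* (b) *)
  (forall f g : F, bounded_op (Phi g) ->
     add_op (Phi f) (Phi g) = Phi (f + g) /\
     mul_op (Phi f) (Phi g) = Phi (f * g)) /\
  (* (c) *)
  (forall f g : F, f * g = 1 ->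
     injective_op (Phi g) /\ inv_op (Phi g) `<=` Phi f /\
     (g * f = f * g -> inv_op (Phi g) = Phi f)) /\
  (* (d) bdd(F, Phi) is a unital subalgebra, Phi restricted to it is an
     algebra homomorphism into L(X) *)
  ((bounded_op (Phi 1) /\
    (forall f g : F, bounded_op (Phi f) -> bounded_op (Phi g) ->
       bounded_op (Phi (f + g)) /\ bounded_op (Phi (f * g))) /\
    (forall (a : R[i]) (f : F), bounded_op (Phi f) -> bounded_op (Phi (a *: f)))) /\
   (Phi 1 = @id_op _ X /\
    forall f g : F, bounded_op (Phi f) -> bounded_op (Phi g) ->
      Phi (f + g) = add_op (Phi f) (Phi g) /\
      Phi (f * g) = mul_op (Phi f) (Phi g) /\
      (forall a : R[i], Phi (a *: f) = scale_op a (Phi f)))).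
Proof.
move=> HP.
have HP' := HP; case: HP' => Hcl [H1 [Hsc [Had [Hmu Hdom]]]].
have Pa := pa HP; have Pb := pb HP.
have Pc : forall f g : F, f * g = 1 ->
     injective_op (Phi g) /\ inv_op (Phi g) `<=` Phi f /\
     (g * f = f * g -> inv_op (Phi g) = Phi f).
  move=> f g fg; split; [|split].
  - move=> x x' y Hx Hx'.
    have := pc0 HP fg Hx; have := pc0 HP fg Hx'.
    by case: (Hcl f) => [[_ _ _ Hf] _] A B; apply: Hf B A.
  - by move=> [y x] Hg; exact: (pc0 HP fg Hg).
  - move=> gf; apply/seteqP; split; first by move=> [y x] Hg; exact: (pc0 HP fg Hg).
    have gf1 : g * f = 1 by rewrite gf.
    by move=> [y x] /= Hf; exact: (pc0 HP gf1 Hf).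
have B1 : bounded_op (Phi 1).
  rewrite H1; split.
  - by case: (Hcl 1) => + _; rewrite H1.
  - by apply/seteqP; split => // x _; exists x.
  - by exists 1 => x y; rewrite /id_op /= => ->; rewrite mul1r.
have Badd : forall f g, bounded_op (Phi f) -> bounded_op (Phi g) -> bounded_op (Phi (f + g)).
  move=> f g bf bg; split; first by case: (Hcl (f + g)).
    apply/seteqP; split => // x _.
    have [y Hy] := dom_bdd bf x; have [z Hz] := dom_bdd bg x.
    by exists (y + z); apply: Had; exists y, z.
  have [Mf [Mf0 HMf]] := normb bf; have [Mg [Mg0 HMg]] := normb bg.
  exists (Mf + Mg) => x w; rewrite -(Pb f g bg).1 => -[y [z [Hy Hz Ew]]]; move: Ew => /= ->.
  rewrite mulrDl; apply: le_trans (ler_normD y z) _.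
  exact: (lerD (HMf _ _ Hy) (HMg _ _ Hz)).
have Bmul : forall f g, bounded_op (Phi f) -> bounded_op (Phi g) -> bounded_op (Phi (f * g)).
  move=> f g bf bg; split; first by case: (Hcl (f * g)).
    apply/seteqP; split => // x _.
    have [y Hy] := dom_bdd bg x; have [z Hz] := dom_bdd bf y.
    by exists z; apply: Hmu; exists y.
  have [Mf [Mf0 HMf]] := normb bf; have [Mg [Mg0 HMg]] := normb bg.
  exists (Mf * Mg) => x w; rewrite -(Pb f g bg).2 => -[y [Hy Hz]].
  apply: le_trans (HMf _ _ Hz) _; rewrite -mulrA.
  exact: (ler_wpM2l Mf0 (HMg _ _ Hy)).
have Bsc : forall (a : R[i]) f, bounded_op (Phi f) -> bounded_op (Phi (a *: f)).
  move=> a f bf; split; first by case: (Hcl (a *: f)).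
    apply/seteqP; split => // x _.
    have [y Hy] := dom_bdd bf x.
    by exists (a *: y); apply: Hsc; exists y.
  have [Mf [Mf0 HMf]] := normb bf.
  exists (`|a| * Mf) => x w; rewrite (Pa f a (or_intror bf)) => -[y [Hy Ew]]; move: Ew => /= ->.
  rewrite normrZ -mulrA.
  exact: (ler_wpM2l (normr_ge0 a) (HMf _ _ Hy)).
split; first by move=> f a H; apply: Pa.
split; first by move=> f g bg; apply: Pb.
split; first exact: Pc.
split; first by split => //; split => // f g bf bg; split; [apply: Badd|apply: Bmul].
split => // f g bf bg; split; first by rewrite (Pb f g bg).1.
split; first by rewrite (Pb f g bg).2.
by move=> a; apply: Pa; right.
Qed.
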